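(* Let $S$ be a completely nonunitary partial isometry on a Hilbert space $\mathcal H$ with $\dim\mathcal K=\dim\tilde{\mathcal K}$ (possibly infinite), where $\mathcal K=(S\mathcal H)^\perp$ and $\tilde{\mathcal K}=\ker S$. For a unitary $A:\tilde{\mathcal K}\to\mathcal K$ define $U_A h=Sh$ for $h\perp\tilde{\mathcal K}$ and $U_Ah=Ah$ for $h\in\tilde{\mathcal K}$. Then $U_A$ is unitary and $\overline{\operatorname{span}}\{U_A^n k: k\in\mathcal K,\ n\in\mathbb Z\}=\mathcal H$. In particular, if $\dim\mathcal K=\dim\tilde{\mathcal K}=1$, then for any unit vector $k\in\mathcal K$ and any $\alpha\in\mathbb T$, with $U_\alpha$ defined by $A\tilde k=\alpha k$ for a unit vector $\tilde k\in\tilde{\mathcal K}$, one has $\overline{\operatorname{span}}\{U_\alpha^n k: n\in\mathbb Z\}=\mathcal H$.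
   Context: A contraction is completely nonunitary (c.n.u.) if there is no nonzero reducing subspace on which it is unitary. For a partial isometry $S$, $S\mathcal H$ is its final space and $(\ker S)^\perp$ its initial space. *)

(* Defs.v *)
From HB Require Import structures.
From mathcomp Require Import all_boot all_order all_algebra.
From mathcomp Require Import reals.
From mathcomp Require Export complex.
Set Implicit Arguments. Unset Strict Implicit. Unset Printing Implicit Defensive.
Import Order.TTheory GRing.Theory Num.Theory.
Local Open Scope ring_scope.

Section Hilbert.
Variables (R : realType) (H : lmodType R[i]) (ip : H -> H -> R[i]).

Definition is_inner_product :=
  [/\ (forall (a : R[i]) x y z, ip (a *: x + y) z = a * ip x z + ip y z),
      (forall x y, ip y x = (ip x y)^*),
      (forall x, 0 <= ip x x) &
      (forall x, ip x x = 0 -> x = 0)].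

Definition nrm (x : H) : R := Num.sqrt (complex.Re (ip x x)).

Definition complete_ip :=
  forall u : nat -> H,
    (forall e : R, 0 < e -> exists N, forall m n, (N <= m)%N -> (N <= n)%N ->
        nrm (u m - u n) < e) ->
    exists l, forall e : R, 0 < e -> exists N, forall n, (N <= n)%N -> nrm (u n - l) < e.

Definition hilbert := is_inner_product /\ complete_ip.

Definition closure (M : H -> Prop) : H -> Prop :=
  fun x => forall e : R, 0 < e -> exists y, M y /\ nrm (x - y) < e.

Definition closed_subspace (M : H -> Prop) :=
  [/\ M 0, (forall x y, M x -> M y -> M (x + y)),
      (forall (a : R[i]) x, M x -> M (a *: x)) &
      (forall x, closure M x -> M x)].

Definition perp (M : H -> Prop) : H -> Prop := fun x => forall y, M y -> ip x y = 0.

Definition span (X : H -> Prop) : H -> Prop :=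
  fun x => exists n (c : 'I_n -> R[i]) (v : 'I_n -> H),
    (forall i, X (v i)) /\ x = \sum_(i < n) c i *: v i.
Definition cspan (X : H -> Prop) : H -> Prop := closure (span X).

Definition linear_op (T : H -> H) :=
  forall (a : R[i]) x y, T (a *: x + y) = a *: T x + T y.
Definition bounded_op (T : H -> H) :=
  exists M : R, forall x, nrm (T x) <= M * nrm x.

Definition ker (T : H -> H) : H -> Prop := fun x => T x = 0.
Definition range (T : H -> H) : H -> Prop := fun y => exists x, T x = y.

Definition partial_isometry (T : H -> H) :=
  [/\ linear_op T, bounded_op T &
      forall x, perp (ker T) x -> nrm (T x) = nrm x].

Definition unitary (T : H -> H) :=
  [/\ linear_op T, (forall x, nrm (T x) = nrm x) & (forall y, exists x, T x = y)].

Definition reducing (T : H -> H) (M : H -> Prop) :=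
  [/\ closed_subspace M, (forall x, M x -> M (T x)) &
      (forall x, perp M x -> perp M (T x))].

Definition unitary_on (T : H -> H) (M : H -> Prop) :=
  (forall x, M x -> nrm (T x) = nrm x) /\ (forall y, M y -> exists x, M x /\ T x = y).

Definition cnu (T : H -> H) :=
  forall M, reducing T M -> unitary_on T M -> forall x, M x -> x = 0.

(* A : M -> N is unitary (M, N subspaces of H; A given as a map on H) *)
Definition unitary_between (A : H -> H) (M N : H -> Prop) :=
  [/\ (forall x, M x -> N (A x)),
      (forall (a : R[i]) x y, M x -> M y -> A (a *: x + y) = a *: A x + A y),
      (forall x, M x -> nrm (A x) = nrm x) &
      (forall y, N y -> exists x, M x /\ A x = y)].

Definition onb (I : Type) (e : I -> H) (M : H -> Prop) :=
  [/\ (forall i, M (e i)), (forall i, ip (e i) (e i) = 1),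
      (forall i j, i <> j -> ip (e i) (e j) = 0) &
      (forall x, M x <-> cspan (fun y => exists i, y = e i) x)].

Definition hdim_eq (M N : H -> Prop) :=
  exists (I : Type) (e f : I -> H), onb e M /\ onb f N.

Definition hdim1 (M : H -> Prop) :=
  exists v, [/\ M v, v <> 0 & forall x, M x -> exists c : R[i], x = c *: v].

Definition is_UA (S A U : H -> H) :=
  [/\ linear_op U, (forall h, perp (ker S) h -> U h = S h) &
      (forall h, ker S h -> U h = A h)].

(* { U^n k : k in K, n in Z }, negative powers described via U^m x = k *)
Definition orbitZ (U : H -> H) (K : H -> Prop) : H -> Prop :=
  fun x => exists k, K k /\ exists n : nat, x = iter n U k \/ iter n U x = k.

End Hilbert.

(* Main.v *)
Require Import Defs.
From HB Require Import structures.
From mathcomp Require Import all_boot all_order all_algebra.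
From mathcomp Require Import reals complex.
From mathcomp Require Import ring lra.
From Stdlib Require Import IndefiniteDescription.
Import Order.TTheory GRing.Theory Num.Theory.
Local Open Scope ring_scope.
Local Notation "x %:C" := (real_complex _ x) (format "x %:C").
Local Notation "x ^*" := (Num.conj x).


Section Basic.
Variables (R : realType) (H : lmodType R[i]) (ip : H -> H -> R[i]).
Hypothesis hip : is_inner_product ip.
Local Notation Rc := (@complex.Re R).
Local Notation Ic := (@complex.Im R).
Local Notation q x := (Rc (ip x x)).
Local Notation nrm := (nrm ip).

Lemma ReM (z w : R[i]) : Rc (z * w) = Rc z * Rc w - Ic z * Ic w.
Proof. by case: z => a b; case: w => c d /=. Qed.
Lemma ImM (z w : R[i]) : Ic (z * w) = Rc z * Ic w + Ic z * Rc w.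
Proof. by case: z => a b; case: w => c d /=. Qed.
Lemma ReD (z w : R[i]) : Rc (z + w) = Rc z + Rc w.
Proof. by case: z => a b; case: w => c d /=. Qed.
Lemma ImD (z w : R[i]) : Ic (z + w) = Ic z + Ic w.
Proof. by case: z => a b; case: w => c d /=. Qed.
Lemma ReN (z : R[i]) : Rc (- z) = - Rc z.
Proof. by case: z. Qed.
Lemma ImN (z : R[i]) : Ic (- z) = - Ic z.
Proof. by case: z. Qed.
Lemma ReJ (z : R[i]) : Rc (z^*) = Rc z.
Proof. by case: z. Qed.
Lemma ImJ (z : R[i]) : Ic (z^*) = - Ic z.
Proof. by case: z. Qed.
Lemma Re0 : Rc 0 = 0. Proof. by []. Qed.
Lemma Im0 : Ic 0 = 0. Proof. by []. Qed.
Lemma ReC (a : R) : Rc a%:C = a. Proof. by []. Qed.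
Lemma ImC (a : R) : Ic a%:C = 0. Proof. by []. Qed.
Lemma ceqP (z w : R[i]) : Rc z = Rc w -> Ic z = Ic w -> z = w.
Proof. by case: z => a b; case: w => c d /= -> ->. Qed.
Lemma ge0c (z : R[i]) : 0 <= z -> z = (Rc z)%:C /\ 0 <= Rc z.
Proof. case: z => a b; rewrite lecE /= => /andP[/eqP -> h]. by []. Qed.

Lemma ip0l x : ip 0 x = 0.
Proof.
case: hip => h1 _ _ _. have := h1 1 0 0 x. rewrite scaler0 addr0 mul1r.
move=> h; apply: (addrI (ip 0 x)); by rewrite addr0 -h.
Qed.
Lemma ipDl x y z : ip (x + y) z = ip x z + ip y z.
Proof. case: hip => h1 _ _ _. by rewrite -[x in LHS]scale1r h1 mul1r. Qed.
Lemma ipZl a x z : ip (a *: x) z = a * ip x z.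
Proof. case: hip => h1 _ _ _. by rewrite -[_ *: x]addr0 h1 ip0l addr0. Qed.
Lemma ipC x y : ip y x = (ip x y)^*.
Proof. by case: hip. Qed.
Lemma ipNl x z : ip (- x) z = - ip x z.
Proof. by rewrite -scaleN1r ipZl mulN1r. Qed.
Lemma ipBl x y z : ip (x - y) z = ip x z - ip y z.
Proof. by rewrite ipDl ipNl. Qed.
Lemma ip0r x : ip x 0 = 0.
Proof. by rewrite ipC ip0l rmorph0. Qed.
Lemma ipDr x y z : ip z (x + y) = ip z x + ip z y.
Proof. by rewrite !(ipC _ z) ipDl rmorphD. Qed.
Lemma ipZr a x z : ip z (a *: x) = a^* * ip z x.
Proof. by rewrite !(ipC _ z) ipZl rmorphM. Qed.
Lemma ipNr x z : ip z (- x) = - ip z x.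
Proof. by rewrite !(ipC _ z) ipNl rmorphN. Qed.
Lemma ipBr x y z : ip z (x - y) = ip z x - ip z y.
Proof. by rewrite ipDr ipNr. Qed.

Lemma ipself x : ip x x = (q x)%:C.
Proof. case: hip => _ _ h3 _. by case: (ge0c _ (h3 x)). Qed.
Lemma q_ge0 x : 0 <= q x.
Proof. case: hip => _ _ h3 _. by case: (ge0c _ (h3 x)). Qed.
Lemma q_eq0 x : q x = 0 -> x = 0.
Proof. case: hip => _ _ _ h4 h. apply: h4. by rewrite ipself h. Qed.
Lemma ReipC x y : Rc (ip y x) = Rc (ip x y).
Proof. by rewrite ipC ReJ. Qed.

Lemma qD x y : q (x + y) = q x + q y + 2 * Rc (ip x y).
Proof.
rewrite ipDl !ipDr !ReD (ReipC x y). ring.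
Qed.
Lemma qN x : q (- x) = q x.
Proof. by rewrite ipNl ipNr opprK. Qed.
Lemma qB x y : q (x - y) = q x + q y - 2 * Rc (ip x y).
Proof. rewrite qD qN ipNr ReN. ring. Qed.
Lemma qZ a x : q (a *: x) = (Rc a ^+ 2 + Ic a ^+ 2) * q x.
Proof.
rewrite ipZl ipZr ipself ReM ImM /=.
case: a => a b /=. ring.
Qed.
Lemma ReipZr a x y : Rc (ip x (a *: y)) = Rc a * Rc (ip x y) + Ic a * Ic (ip x y).
Proof. rewrite ipZr ReM ReJ ImJ. ring. Qed.

Lemma nrm_ge0 x : 0 <= nrm x.
Proof. exact: sqrtr_ge0. Qed.
Lemma nrm_sq x : nrm x ^+ 2 = q x.
Proof. rewrite /Defs.nrm sqr_sqrtr //. exact: q_ge0. Qed.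
Lemma nrm_eq0 x : nrm x = 0 -> x = 0.
Proof. move=> h; apply: q_eq0. by rewrite -nrm_sq h expr0n. Qed.
Lemma nrm0 : nrm 0 = 0.
Proof. by rewrite /Defs.nrm ip0l sqrtr0. Qed.
Lemma nrmN x : nrm (- x) = nrm x.
Proof. by rewrite /Defs.nrm qN. Qed.
Lemma nrmB x y : nrm (x - y) = nrm (y - x).
Proof. by rewrite -nrmN opprB. Qed.
Lemma nrm_le x y : (nrm x <= nrm y) = (q x <= q y).
Proof. by rewrite -!nrm_sq ler_sqr ?nrm_ge0 // nnegrE nrm_ge0. Qed.
Lemma nrm_lt x y : (nrm x < nrm y) = (q x < q y).
Proof. by rewrite -!nrm_sq ltr_sqr ?nrm_ge0 // nnegrE nrm_ge0. Qed.
Lemma nrm_eq x y : q x = q y -> nrm x = nrm y.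
Proof. by rewrite /Defs.nrm => ->. Qed.

Lemma CS x y : Rc (ip x y) <= nrm x * nrm y.
Proof.
set b := Rc (ip x y).
have hq : forall t : R, 0 <= q x + t ^+ 2 * q y + 2 * t * b.
  move=> t. have := q_ge0 (x + t%:C *: y).
  by rewrite qD qZ ReipZr /= expr0n /= !addr0 mul0r addr0 mulrA.
have hx := q_ge0 x; have hy := q_ge0 y.
suff hb : b ^+ 2 <= q x * q y.
  have hc : 0 <= nrm x * nrm y by exact: mulr_ge0 (nrm_ge0 _) (nrm_ge0 _).
  have hb2 : b ^+ 2 <= (nrm x * nrm y) ^+ 2 by rewrite exprMn !nrm_sq.
  nra.
have [hy0|hyp] := eqVneq (q y) 0.
  have -> : b = 0 by rewrite /b (q_eq0 _ hy0) ip0r.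
  rewrite expr0n /=. exact: mulr_ge0.
have hyp' : 0 < q y by rewrite lt0r hyp hy.
have := hq (- b / q y).
move=> h.
have e : q x + (- b / q y) ^+ 2 * q y + 2 * (- b / q y) * b =
   (q x * q y - b ^+ 2) / q y.
  field. exact: hyp.
rewrite e pmulr_lge0 ?invr_gt0 // in h.
by rewrite -subr_ge0.
Qed.

Lemma nrmD x y : nrm (x + y) <= nrm x + nrm y.
Proof.
rewrite -(ler_sqr (x := nrm (x+y))) ?nnegrE ?addr_ge0 ?nrm_ge0 //.
rewrite nrm_sq qD sqrrD !nrm_sq.
have := CS x y. lra.
Qed.

Lemma nrmZ a x : nrm (a *: x) = Num.sqrt (Rc a ^+ 2 + Ic a ^+ 2) * nrm x.
Proof. by rewrite /Defs.nrm qZ sqrtrM // addr_ge0 // sqr_ge0. Qed.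


Lemma fchoice (A B : Type) (P : A -> B -> Prop) :
  (forall a, exists b, P a b) -> exists f : A -> B, forall a, P a (f a).
Proof.
move=> h. exists (fun a => proj1_sig (constructive_indefinite_description _ (h a))).
move=> a. exact: proj2_sig (constructive_indefinite_description _ (h a)).
Qed.

Definition eps (n : nat) : R := (n.+1%:R)^-1.
Lemma eps_gt0 n : 0 < eps n.
Proof. by rewrite /eps invr_gt0 ltr0n. Qed.
Lemma eps_le1 n : eps n <= 1.
Proof. by rewrite /eps invf_le1 ?ltr0n // ler1n. Qed.
Lemma eps_mono m n : (m <= n)%N -> eps n <= eps m.
Proof. move=> h. rewrite /eps lef_pV2 ?posrE ?ltr0n // ler_nat. by []. Qed.
Lemma eps_small e : 0 < e -> exists N, forall n, (N <= n)%N -> eps n < e.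
Proof.
move=> he. have h0 : 0 <= e^-1 by rewrite invr_ge0 ltW.
have hb := archi_boundP h0.
exists (Num.Def.archi_bound e^-1) => n hn.
apply: le_lt_trans (eps_mono _ _ hn) _.
rewrite /eps. have he1 : e = (e^-1)^-1 by rewrite invrK. rewrite {2}he1 ltf_pV2 ?posrE ?ltr0n ?invr_gt0 //.
apply: lt_le_trans hb _. by rewrite ler_nat leqnSn.
Qed.

Lemma nrm_ltP v e : 0 < e -> (nrm v < e) = (q v < e ^+ 2).
Proof. move=> he. by rewrite -nrm_sq ltr_sqr ?nnegrE ?nrm_ge0 ?ltW. Qed.

Lemma r_eq0 (c : R[i]) : Rc c ^+ 2 + Ic c ^+ 2 <= 0 -> c = 0.
Proof.
move=> h. have h1 := sqr_ge0 (Rc c). have h2 := sqr_ge0 (Ic c).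
apply: ceqP => /=; apply/eqP; rewrite -sqrf_eq0; apply/eqP; lra.
Qed.

Lemma Re_ip_self_scale v y : Rc (ip v ((ip v y) *: y)) =
   Rc (ip v y) ^+ 2 + Ic (ip v y) ^+ 2.
Proof. rewrite ReipZr. ring. Qed.

Lemma perp_closed_subspace M : closed_subspace ip (perp ip M).
Proof.
split.
- move=> y _; exact: ip0l.
- move=> x y hx hy z hz. by rewrite ipDl hx // hy // addr0.
- move=> a x hx z hz. by rewrite ipZl hx // mulr0.
- move=> x hx y hy. apply: r_eq0.
  set c := ip x y. set r := Rc c ^+ 2 + Ic c ^+ 2.
  have hr0 : 0 <= r by rewrite /r addr_ge0 ?sqr_ge0.
  rewrite leNgt; apply/negP => hr.
  set B := nrm (c *: y).
  have hB := nrm_ge0 (c *: y).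
  have he : 0 < r / (B + 1) by rewrite divr_gt0 // ltr_pwDr.
  have [z [hz hxz]] := hx _ he.
  have e1 : ip (x - z) y = c by rewrite ipBl (hz _ hy) subr0.
  have := CS (x - z) (c *: y). rewrite -{1}e1 Re_ip_self_scale e1 -/r -/B.
  move=> hcs.
  have ht : r / (B + 1) * (B + 1) = r by rewrite divfK // gt_eqF // ltr_pwDr.
  move: hxz hcs ht he; set t := r / (B + 1); set n := nrm (x - z) => h1 h2 h3 h4.
  have h5 : n * B <= t * B by rewrite ler_wpM2r // ltW.
  nra.
Qed.

Hypothesis hc : complete_ip ip.

Lemma par a b : q (a - b) + q (a + b) = 2 * q a + 2 * q b.
Proof. rewrite qB qD. ring. Qed.

Lemma half_sum (z : H) : (2^-1 : R[i]) *: z + (2^-1 : R[i]) *: z = z.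
Proof. by rewrite -scalerDl -[2^-1]mul1r -splitr scale1r. Qed.

Lemma subsub (x u v : H) : (x - u) + (x - v) = (x + x) - (u + v).
Proof. by rewrite addrACA opprD. Qed.

Lemma Re_realM (t : R) (c : R[i]) : Rc (t%:C * c) = t * Rc c.
Proof. rewrite ReM /=. ring. Qed.
Lemma Im_realM (t : R) (c : R[i]) : Ic (t%:C * c) = t * Ic c.
Proof. rewrite ImM /=. ring. Qed.

Lemma proj_thm C x : closed_subspace ip C -> exists m, C m /\ perp ip C (x - m).
Proof.
case=> C0 CD CZ Ccl.
pose E := (fun r : R => exists m, C m /\ r = q (x - m)).
have hne : classical_sets.nonempty E by exists (q (x - 0)); exists 0.
have hlb0 : classical_sets.lbound E 0 by move=> r [m [_ ->]]; exact: q_ge0.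
have hlb : classical_sets.has_lbound E by exists 0.
set d := inf E.
have hd1 : forall m, C m -> d <= q (x - m).
  move=> m hm. apply: (ge_inf hlb). by exists m.
have hd0 : 0 <= d by apply: lb_le_inf hne hlb0.
have happ : forall n, exists m, C m /\ q (x - m) < d + eps n.
  move=> n. have : d < d + eps n by rewrite ltrDl eps_gt0.
  case/(inf_lt hne) => r [m [hm ->]] hr. by exists m.
have [ms hms] := fchoice _ _ _ happ.
have CB : forall u v, C u -> C v -> C (u - v).
  move=> u v hu hv. apply: CD hu _. rewrite -scaleN1r. exact: CZ.
have hcau : forall e : R, 0 < e -> exists N, forall m n, (N <= m)%N -> (N <= n)%N ->
        nrm (ms m - ms n) < e.
  move=> e he. have he4 : 0 < e ^+ 2 / 4 by rewrite divr_gt0 // exprn_gt0.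
  have [N hN] := eps_small _ he4.
  exists N => m n hm hn. rewrite nrm_ltP //.
  have [hcm hqm] := hms m. have [hcn hqn] := hms n.
  pose mid := (2^-1 : R[i]) *: (ms m + ms n).
  have hmid : C mid by apply: CZ; apply: CD.
  have e1 : ms m - ms n = (x - ms n) - (x - ms m).
    by rewrite opprB [RHS]addrC addrA subrK.
  have e2 : (x - ms n) + (x - ms m) = (x - mid) + (x - mid).
    by rewrite !subsub half_sum [ms n + _]addrC.
  have := par (x - ms n) (x - ms m). rewrite -e1 e2 (qD (x - mid) (x - mid)).
  have := hd1 _ hmid. have := hN _ hm. have := hN _ hn.
  have := eps_gt0 m. have := eps_gt0 n.
  lra.
have [m0 hm0] := hc ms hcau.
have hCm0 : C m0.
  apply: Ccl => e he. have [N hN] := hm0 e he. exists (ms N); split; first by case: (hms N).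
  rewrite nrmB. exact: hN.
exists m0; split => //.
have hmin : q (x - m0) <= d.
  apply/ler_addgt0Pr => e he.
  set dl := e / (3 * (2 * d + 5)).
  have hdl : 0 < dl by rewrite /dl divr_gt0 // mulr_gt0 // ltr_wpDl // mulr_ge0.
  have hdl' : dl * (3 * (2 * d + 5)) = e by rewrite /dl divfK // gt_eqF // mulr_gt0 // ltr_wpDl // mulr_ge0.
  have hmn : 0 < Num.min dl 1 by rewrite lt_min hdl ltr01.
  have [N1 hN1] := hm0 _ hmn.
  have he3 : 0 < e / 3 by rewrite divr_gt0.
  have [N2 hN2] := eps_small _ he3.
  set n := maxn N1 N2.
  have hc1 := hN1 n (leq_maxl _ _). have hc2 := hN2 n (leq_maxr _ _).
  rewrite lt_min in hc1. case/andP: hc1 => hc1 hc1'.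
  have [_ hqa] := hms n.
  have e1 : x - m0 = (x - ms n) + (ms n - m0) by rewrite addrA subrK.
  rewrite e1 qD.
  have hcs := CS (x - ms n) (ms n - m0).
  move: hc1 hc1' hcs hqa.
  rewrite -(nrm_sq (x - ms n)) -(nrm_sq (ms n - m0)).
  have := nrm_ge0 (x - ms n). have := nrm_ge0 (ms n - m0). have := eps_le1 n.
  set na := nrm (x - ms n). set nc := nrm (ms n - m0). set rr := Rc _.
  move=> h1 h2 h3 h4 h5 h6 h7.
  have hna : na <= d + 2 by nra.
  have h8 : nc ^+ 2 <= nc by nra.
  have h9 : 2 * na * nc <= 2 * (d + 2) * nc by nra.
  have h10 : (2 * d + 5) * nc <= (2 * d + 5) * dl by rewrite ler_pM2l ?ltW // ltr_wpDl // mulr_ge0.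
  nra.
move=> y hy. set w := x - m0. set c := ip w y. apply: r_eq0.
set r := Rc c ^+ 2 + Ic c ^+ 2.
have hr : 0 <= r by rewrite /r addr_ge0 ?sqr_ge0.
have hqy := q_ge0 y.
set t := (q y + 1)^-1.
have ht : t * (q y + 1) = 1 by rewrite mulVf // gt_eqF // ltr_wpDl.
have ht0 : 0 < t by rewrite invr_gt0 ltr_wpDl.
pose v := (t%:C * c) *: y.
have hv : C (m0 + v) by apply: CD => //; apply: CZ.
have := hd1 _ hv.
have -> : x - (m0 + v) = w - v by rewrite opprD addrA.
rewrite qB qZ ReipZr Re_realM Im_realM -/c.
move: hmin; rewrite -/w => hmin.
have e3 : ((t * Rc c) ^+ 2 + (t * Ic c) ^+ 2) * q y = t ^+ 2 * r * q y by rewrite /r; ring.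
have e4 : t * Rc c * Rc c + t * Ic c * Ic c = t * r by rewrite /r; ring.
rewrite e3 e4 => h.
have h2 : 2 * t * r <= t ^+ 2 * r * q y by lra.
have h3 : 2 * r <= t * r * q y.
  rewrite -(ler_pM2l ht0). nra.
have h4 : t * q y <= 1 by nra.
nra.
Qed.

Lemma nrm_tri a b c : nrm (a - c) <= nrm (a - b) + nrm (b - c).
Proof.
have -> : a - c = (a - b) + (b - c) by rewrite addrA subrK.
exact: nrmD.
Qed.

Lemma span_sub (X : H -> Prop) x : X x -> Defs.span X x.
Proof.
move=> hx. exists 1%N, (fun _ => 1), (fun _ => x); split => //.
by rewrite big_ord1 scale1r.
Qed.

Lemma span0 (X : H -> Prop) : Defs.span X 0.
Proof. exists 0%N, (fun _ => 0), (fun _ => 0); split; first by case.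
by rewrite big_ord0. Qed.

Lemma spanD (X : H -> Prop) x y : Defs.span X x -> Defs.span X y -> Defs.span X (x + y).
Proof.
move=> [n [c [v [hv ->]]]] [m [c' [v' [hv' ->]]]].
exists (n + m)%N, (fun i => match split i with inl j => c j | inr j => c' j end),
  (fun i => match split i with inl j => v j | inr j => v' j end); split.
  by move=> i; case: (split i).
rewrite big_split_ord /=. congr (_ + _); apply: eq_bigr => i _.
  have -> : lshift m i = unsplit (inl i) by [].
  by rewrite unsplitK.
have -> : rshift n i = unsplit (inr i) by [].
by rewrite unsplitK.
Qed.

Lemma spanZ (X : H -> Prop) a x : Defs.span X x -> Defs.span X (a *: x).
Proof.
move=> [n [c [v [hv ->]]]].
exists n, (fun i => a * c i), v; split => //.
rewrite scaler_sumr. apply: eq_bigr => i _. by rewrite scalerA.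
Qed.

Lemma closure_sub (M : H -> Prop) x : M x -> Defs.closure ip M x.
Proof. move=> hx e he. exists x; split => //. by rewrite subrr nrm0. Qed.

Lemma closure_closure (M : H -> Prop) x : Defs.closure ip (Defs.closure ip M) x -> Defs.closure ip M x.
Proof.
move=> h e he. have he2 : 0 < e / 2 by rewrite divr_gt0.
have [y [hy hxy]] := h _ he2. have [z [hz hyz]] := hy _ he2.
exists z; split => //. apply: le_lt_trans (nrm_tri x y z) _.
rewrite [e]splitr. exact: ltrD.
Qed.

Lemma cspan_closed (X : H -> Prop) : closed_subspace ip (cspan ip X).
Proof.
split.
- apply: closure_sub. exact: span0.
- move=> x y hx hy e he. have he2 : 0 < e / 2 by rewrite divr_gt0.
  have [x' [hx' h1]] := hx _ he2. have [y' [hy' h2]] := hy _ he2.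
  exists (x' + y'); split; first exact: spanD.
  have -> : x + y - (x' + y') = (x - x') + (y - y') by rewrite addrACA opprD.
  apply: le_lt_trans (nrmD _ _) _. rewrite [e]splitr. exact: ltrD.
- move=> a x hx e he.
  set B := Num.sqrt (Rc a ^+ 2 + Ic a ^+ 2).
  have hB : 0 <= B by exact: sqrtr_ge0.
  have he' : 0 < e / (B + 1) by rewrite divr_gt0 // ltr_wpDl.
  have [x' [hx' h1]] := hx _ he'.
  exists (a *: x'); split; first exact: spanZ.
  rewrite -scalerBr nrmZ -/B.
  have hht : e / (B + 1) * (B + 1) = e by rewrite divfK // gt_eqF // ltr_wpDl.
  move: h1 hht. set t := e / (B + 1). have := nrm_ge0 (x - x'). nra.
- move=> x hx. exact: closure_closure.
Qed.

Lemma closed_contains_cspan (C X : H -> Prop) : closed_subspace ip C -> (forall x, X x -> C x) ->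
  forall x, cspan ip X x -> C x.
Proof.
case=> C0 CD CZ Ccl hX.
have hsp : forall x, Defs.span X x -> C x.
  move=> _ [n [c [v [hv ->]]]].
  apply: (big_ind C) => //. move=> i _. apply: CZ. exact: hX.
move=> x hx. apply: Ccl => e he. have [y [hy h]] := hx _ he.
exists y; split => //. exact: hsp.
Qed.

Lemma perp_zero (Z : H -> Prop) x : Z x -> perp ip Z x -> x = 0.
Proof. move=> h1 h2. case: hip => _ _ _ h4. apply: h4. exact: h2. Qed.

Lemma dense_of_perp (X : H -> Prop) : (forall x, perp ip X x -> x = 0) -> forall x, cspan ip X x.
Proof.
move=> h x. have [m [hm hp]] := proj_thm _ x (cspan_closed X).
have : x - m = 0.
  apply: h => y hy. apply: hp. apply: closure_sub. exact: span_sub.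
by move/eqP; rewrite subr_eq0 => /eqP ->.
Qed.

Lemma small0 (a : R) : 0 <= a -> (forall e, 0 < e -> a < e) -> a = 0.
Proof.
move=> h0 h. apply: le_anti; rewrite h0 andbT.
apply/ler_addgt0Pr => e he. rewrite add0r. exact: ltW (h e he).
Qed.

Lemma ip_pres (T : H -> H) (D : H -> Prop) :
  linear_op T -> (forall a x y, D x -> D y -> D (a *: x + y)) ->
  (forall z, D z -> nrm (T z) = nrm z) ->
  forall x y, D x -> D y -> ip (T x) (T y) = ip x y.
Proof.
move=> hT hD hn x y hx hy.
have hq : forall z, D z -> q (T z) = q z by move=> z hz; rewrite -!nrm_sq hn.
have TD : forall u v, T (u + v) = T u + T v.
  by move=> u v; have := hT 1 u v; rewrite !scale1r.
have DD : forall u v, D u -> D v -> D (u + v).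
  by move=> u v hu hv; have := hD 1 u v hu hv; rewrite scale1r.
have DZ : forall a u, D u -> D (a *: u).
  move=> a u hu. have h0 : D 0 by have := hD (-1) u u hu hu; rewrite scaleN1r addNr.
  by rewrite -[_ *: u]addr0; apply: hD.
have TZ : forall a u, T (a *: u) = a *: T u.
  move=> a u. have T0 : T 0 = 0.
    have := hT 1 0 0. rewrite scaler0 add0r scale1r => h.
    by apply: (addrI (T 0)); rewrite addr0 -h.
  by rewrite -[_ *: u]addr0 hT T0 addr0.
have hre : forall u v, D u -> D v -> Rc (ip (T u) (T v)) = Rc (ip u v).
  move=> u v hu hv. have := qD (T u) (T v). have := qD u v.
  rewrite -TD !hq //; last exact: DD. lra.
apply: ceqP; first exact: hre.
have him : forall u v, Ic (ip u v) = Rc (ip u ('i *: v)).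
  move=> u v. rewrite ReipZr /=. ring.
rewrite !him -TZ. apply: hre => //. exact: DZ.
Qed.

Section Lin.
Variable T : H -> H.
Hypothesis hT : linear_op T.
Lemma linD u v : T (u + v) = T u + T v.
Proof. by have := hT 1 u v; rewrite !scale1r. Qed.
Lemma lin0 : T 0 = 0.
Proof. have := linD 0 0. rewrite addr0 => h. by apply: (addrI (T 0)); rewrite addr0 -h. Qed.
Lemma linZ a u : T (a *: u) = a *: T u.
Proof. by rewrite -[_ *: u]addr0 hT lin0 addr0. Qed.
Lemma linN u : T (- u) = - T u.
Proof. by rewrite -scaleN1r linZ scaleN1r. Qed.
Lemma linB u v : T (u - v) = T u - T v.
Proof. by rewrite linD linN. Qed.
End Lin.

Lemma subspB (C : H -> Prop) : closed_subspace ip C -> forall u v, C u -> C v -> C (u - v).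
Proof. case=> _ CD CZ _ u v hu hv. apply: CD hu _. rewrite -scaleN1r. exact: CZ. Qed.

Variable S : H -> H.
Hypothesis hS : partial_isometry ip S.

Lemma S_lin : linear_op S. Proof. by case: hS. Qed.
Lemma S_iso x : perp ip (ker S) x -> nrm (S x) = nrm x.
Proof. case: hS => _ _ h. exact: h. Qed.
Lemma S_bnd : exists B, 0 < B /\ forall v, nrm (S v) <= B * nrm v.
Proof.
case: hS => _ [M hM] _. exists (`|M| + 1); split; first by rewrite ltr_wpDl.
move=> v. apply: le_trans (hM v) _. rewrite ler_wpM2r ?nrm_ge0 //.
apply: le_trans (ler_norm M) _. by rewrite lerDl.
Qed.

Lemma Kt_closed : closed_subspace ip (ker S).
Proof.
have hl := S_lin.
split.
- exact: lin0.
- move=> x y hx hy. by rewrite /ker linD // hx hy addr0.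
- move=> a x hx. by rewrite /ker linZ // hx scaler0.
- move=> x hx. rewrite /ker. apply: nrm_eq0. apply: small0; first exact: nrm_ge0.
  move=> e he. have [B [hB hb]] := S_bnd.
  have [y [hy h]] := hx _ (divr_gt0 he hB).
  have -> : S x = S (x - y) by rewrite linB // hy subr0.
  apply: le_lt_trans (hb _) _. by rewrite mulrC -ltr_pdivlMr.
Qed.

Lemma decompK h : exists h2, ker S h2 /\ perp ip (ker S) (h - h2).
Proof. exact: proj_thm _ h Kt_closed. Qed.

Lemma range_closed : closed_subspace ip (range S).
Proof.
have hl := S_lin.
have hP := perp_closed_subspace (ker S).
split.
- exists 0; exact: lin0.
- move=> _ _ [x <-] [y <-]. exists (x + y). by rewrite linD.
- move=> a _ [x <-]. exists (a *: x). by rewrite linZ.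
move=> y hy.
have happ : forall n, exists p, perp ip (ker S) p /\ nrm (y - S p) < eps n.
  move=> n. have [_ [[x <-] h]] := hy _ (eps_gt0 n).
  have [x2 [hx2 hp]] := decompK x. exists (x - x2); split => //.
  by rewrite linB // hx2 subr0.
have [ps hps] := fchoice _ _ _ happ.
have hcau : forall e : R, 0 < e -> exists N, forall m n, (N <= m)%N -> (N <= n)%N ->
        nrm (ps m - ps n) < e.
  move=> e he. have [N hN] := eps_small _ (divr_gt0 he (ltr0Sn _ 1)).
  exists N => m n hm hn.
  have [hpm hym] := hps m. have [hpn hyn] := hps n.
  rewrite -(S_iso (ps m - ps n)); last exact: (subspB _ hP _ _ hpm hpn).
  rewrite linB //. apply: le_lt_trans (nrm_tri _ y _) _.
  rewrite nrmB [e]splitr. apply: ltrD.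
    exact: lt_trans hym (hN _ hm).
  exact: lt_trans hyn (hN _ hn).
have [p hp] := hc ps hcau.
exists p. apply/eqP; rewrite -subr_eq0; apply/eqP. apply: nrm_eq0.
apply: small0; first exact: nrm_ge0.
move=> e he. have [B [hB hb]] := S_bnd.
have he2 : 0 < e / 2 by rewrite divr_gt0.
have [N1 hN1] := hp _ (divr_gt0 he2 hB).
have [N2 hN2] := eps_small _ he2.
set n := maxn N1 N2.
have h1 := hN1 n (leq_maxl _ _). have h2 := hN2 n (leq_maxr _ _).
apply: le_lt_trans (nrm_tri _ (S (ps n)) _) _.
rewrite [e]splitr. apply: ltrD.
  rewrite -linB //. apply: le_lt_trans (hb _) _. rewrite nrmB.
  by rewrite mulrC -ltr_pdivlMr.
rewrite nrmB. case: (hps n) => _ h. exact: lt_trans h h2.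
Qed.

Lemma perp_self_zero (Z : H -> Prop) z : Z z -> perp ip Z z -> z = 0.
Proof. exact: perp_zero. Qed.

Lemma subsubr (u v w : H) : (u - v) - (u - w) = w - v.
Proof. by rewrite opprB addrC addrA subrK. Qed.

Lemma q_orth a b : ip a b = 0 -> q (a + b) = q a + q b.
Proof. move=> h. rewrite qD h /=. ring. Qed.

Variable A : H -> H.
Hypothesis hA : unitary_between ip A (ker S) (perp ip (range S)).

Lemma A_lin a x y : ker S x -> ker S y -> A (a *: x + y) = a *: A x + A y.
Proof. case: hA => _ h _ _. exact: h. Qed.
Lemma A0 : A 0 = 0.
Proof.
have h0 : ker S 0 by rewrite /ker lin0 //; exact: S_lin.
have := A_lin 1 _ _ h0 h0. rewrite scaler0 addr0 scale1r => h.
by apply: (addrI (A 0)); rewrite addr0 -h.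
Qed.

Lemma UA_eq U : is_UA ip S A U -> forall h h2, ker S h2 ->
  perp ip (ker S) (h - h2) -> U h = S h + A h2.
Proof.
case=> hU hUS hUA h h2 hk hp.
have e : h = (h - h2) + h2 by rewrite subrK.
rewrite {1}e linD // hUS // hUA // linB ?hk ?subr0 //. exact: S_lin.
Qed.

Lemma UA_unitary U : is_UA ip S A U -> unitary ip U.
Proof.
move=> hUA. have hl := S_lin.
have hU : linear_op U by case: hUA.
split => //.
- move=> x. have [x2 [hx2 hp]] := decompK x.
  rewrite (UA_eq _ hUA _ _ hx2 hp). apply: nrm_eq.
  have -> : S x = S (x - x2) by rewrite linB // hx2 subr0.
  case: hA => hAK _ hAi _.
  rewrite q_orth; last first.
    rewrite ipC (hAK _ hx2) //; first by rewrite rmorph0.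
    by exists (x - x2).
  rewrite -!nrm_sq S_iso // hAi //.
  have hq : q ((x - x2) + x2) = q (x - x2) + q x2 by rewrite q_orth //; exact: hp.
  rewrite subrK in hq. by rewrite !nrm_sq hq.
- move=> y. have [m [[x hx] hym]] := proj_thm _ y range_closed.
  have [x2 [hx2 hp]] := decompK x.
  case: hA => _ _ _ hAs. have [z [hz hzA]] := hAs _ hym.
  exists ((x - x2) + z).
  rewrite (UA_eq _ hUA _ _ hz); last by rewrite addrK.
  rewrite linD // hz addr0 hzA (linB _ hl) hx2 subr0 hx.
  by rewrite addrC subrK.
Qed.

Lemma UA_exists : exists U, is_UA ip S A U.
Proof.
have hl := S_lin.
have hP := perp_closed_subspace (ker S).
have [pK hpK] := fchoice _ _ _ decompK.
have uniq : forall h z, ker S z -> perp ip (ker S) (h - z) -> z = pK h.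
  move=> h z hz hp. have [hk hp'] := hpK h.
  apply/eqP; rewrite eq_sym -subr_eq0; apply/eqP.
  apply: (perp_zero (ker S)); first exact: (subspB _ Kt_closed).
  rewrite -(subsubr h). exact: (subspB _ hP).
have Kt0 : ker S 0 by rewrite /ker lin0.
exists (fun h => S h + A (pK h)). split.
- move=> a x y.
  have hx := hpK x. have hy := hpK y.
  have -> : pK (a *: x + y) = a *: pK x + pK y.
    symmetry; apply: uniq.
      case: Kt_closed => _ CD CZ _. apply: CD; last by case: hy.
      apply: CZ; by case: hx.
    have -> : a *: x + y - (a *: pK x + pK y) = a *: (x - pK x) + (y - pK y).
      by rewrite scalerBr opprD addrACA.
    case: hP => _ CD CZ _. apply: CD; last by case: hy.
    apply: CZ; by case: hx.
  rewrite A_lin; [|by case: hx|by case: hy].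
  rewrite hl scalerDr addrACA. by [].
- move=> h hh. rewrite -(uniq h 0) // ?A0 ?addr0 //. by rewrite subr0.
- move=> h hh. rewrite -(uniq h h) // ?hh ?add0r //. rewrite subrr.
  by case: hP.
Qed.

Hypothesis hcnu : cnu ip S.

Lemma UA_dense U : is_UA ip S A U -> forall x, cspan ip (orbitZ U (perp ip (range S))) x.
Proof.
move=> hUA. have hl := S_lin.
have [hU hUS hUA'] := hUA.
have [_ hiso hsurj] := UA_unitary _ hUA.
set K := perp ip (range S).
set O := orbitZ U K.
have Uinj : forall x y, U x = U y -> x = y.
  move=> x y h. apply/eqP; rewrite -subr_eq0; apply/eqP. apply: nrm_eq0.
  by rewrite -hiso linB // h subrr nrm0.
have Upres : forall x y, ip (U x) (U y) = ip x y.
  move=> x y. apply: (ip_pres U (fun _ => True) hU) => //.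
have OK : forall k, K k -> O k by move=> k hk; exists k; split => //; exists 0%N; left.
have OKt : forall z, ker S z -> O z.
  move=> z hz. exists (U z); split.
    rewrite hUA' //. by case: hA => h _ _ _; apply: h.
  by exists 1%N; right.
have OU : forall x, O x -> O (U x).
  move=> x [k [hk [n [->|hn]]]].
    exists k; split => //. by exists n.+1; left.
  exists k; split => //. case: n hn => [|n] hn.
    by exists 1%N; left; rewrite /= -hn.
  by exists n; right; rewrite -iterSr.
have Opre : forall y, O (U y) -> O y.
  move=> y [k [hk [n [hn|hn]]]].
    exists k; split => //. case: n hn => [|n] /= hn.
      by exists 1%N; right.
    by exists n; left; apply: Uinj.
  exists k; split => //. by exists n.+1; right; rewrite iterSr.
set N := perp ip O.
have NP : forall h, N h -> perp ip (ker S) h.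
  move=> h hh y hy. apply: hh. exact: OKt.
have N_U : forall h, N h -> N (U h).
  move=> h hh o ho. have [o' ho'] := hsurj o. rewrite -ho' Upres.
  apply: hh. apply: Opre. by rewrite ho'.
have N_pre : forall h, N (U h) -> N h.
  move=> h hh o ho. rewrite -Upres. apply: hh. exact: OU.
have hN : forall x, N x -> x = 0.
  apply: hcnu.
  - split.
    + exact: perp_closed_subspace.
    + move=> x hx. rewrite -hUS; last exact: NP. exact: N_U.
    + move=> x hx y hy. have [y' hy'] := hsurj y. rewrite -hy'.
      have hNy' : N y' by apply: N_pre; rewrite hy'.
      have [x2 [hx2 hp]] := decompK x.
      have -> : S x = U (x - x2) by rewrite hUS // linB // hx2 subr0.
      rewrite Upres ipBl (hx _ hNy') ipC (hNy' _ (OKt _ hx2)).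
      by rewrite rmorph0 subrr.
  - split.
    + move=> x hx. exact: S_iso _ (NP _ hx).
    + move=> y hy. have [x hx] := hsurj y.
      have hNx : N x by apply: N_pre; rewrite hx.
      exists x; split => //. rewrite -hx hUS //; exact: NP.
exact: dense_of_perp.
Qed.

End Basic.

Arguments nrm0 : default implicits.
Arguments nrm_eq0 : default implicits.
Arguments nrmZ : default implicits.
Arguments perp_closed_subspace : default implicits.
Arguments Kt_closed : default implicits.
Arguments UA_dense : default implicits.
Arguments UA_unitary : default implicits.
Arguments UA_exists : default implicits.
Arguments cspan_closed : default implicits.
Arguments closure_sub : default implicits.
Arguments spanZ : default implicits.
Arguments span_sub : default implicits.
Arguments closed_contains_cspan : default implicits.
Arguments linZ : default implicits.
Arguments ReM : default implicits.
Arguments ImM : default implicits.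

Lemma iterZ (R : realType) (H : lmodType R[i]) (T : H -> H) : linear_op T ->
  forall n a u, iter n T (a *: u) = a *: iter n T u.
Proof. move=> hT; elim=> [|n IH] a u //=. by rewrite IH linZ. Qed.

Lemma iter_nrm (R : realType) (H : lmodType R[i]) (ip : H -> H -> R[i]) (T : H -> H) :
  (forall x, nrm ip (T x) = nrm ip x) -> forall n u, nrm ip (iter n T u) = nrm ip u.
Proof. move=> hT; elim=> [|n IH] u //=. by rewrite hT IH. Qed.

Theorem mainTheorem4 (R : realType) (H : lmodType R[i]) (ip : H -> H -> R[i])
    (hH : hilbert ip) (S : H -> H)
    (hS : partial_isometry ip S) (hcnu : cnu ip S)
    (hdim : hdim_eq ip (perp ip (range S)) (ker S)) :
  (forall A : H -> H, unitary_between ip A (ker S) (perp ip (range S)) ->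
     (exists U, is_UA ip S A U) /\
     (forall U, is_UA ip S A U ->
        unitary ip U /\
        (forall x, cspan ip (orbitZ U (perp ip (range S))) x))) /\
  (hdim1 (perp ip (range S)) -> hdim1 (ker S) ->
   forall (k kt : H) (alpha : R[i]),
     perp ip (range S) k -> nrm ip k = 1 ->
     ker S kt -> nrm ip kt = 1 -> `|alpha| = 1 ->
     forall U : H -> H,
       linear_op U -> (forall h, perp ip (ker S) h -> U h = S h) ->
       (forall c : R[i], U (c *: kt) = (c * alpha) *: k) ->
       forall x, cspan ip (orbitZ U (fun y => y = k)) x).
Proof.
case: hH => hip hc.
have part1 : forall A : H -> H, unitary_between ip A (ker S) (perp ip (range S)) ->
     (exists U, is_UA ip S A U) /\
     (forall U, is_UA ip S A U ->
        unitary ip U /\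
        (forall x, cspan ip (orbitZ U (perp ip (range S))) x)).
  move=> A hA. split; first exact: UA_exists.
  move=> U hU. split; first exact: UA_unitary hU.
  exact: UA_dense hU.
split => //.
move=> [v [hKv hv0 hKv']] [w [hw hw0 hw']] k kt alpha hk hnk hkt hnkt hal U hU hUS hUk.
set K := perp ip (range S).
have nz : forall z : H, nrm ip z = 1 -> z <> 0.
  by move=> z hz h0; move: hz; rewrite h0 nrm0 // => /eqP; rewrite eq_sym oner_eq0.
have mult : forall (M : H -> Prop) (u z : H), (forall x, M x -> exists c : R[i], x = c *: u) ->
    M z -> z <> 0 -> forall x, M x -> exists c : R[i], x = c *: z.
  move=> M u z hM hz hz0 x hx. have [d hd] := hM _ hz. have [c hcx] := hM _ hx.
  have hd0 : d != 0 by apply/eqP => hd0; apply: hz0; rewrite hd hd0 scale0r.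
  exists (c / d). by rewrite hd scalerA divfK.
have mKt := mult _ _ _ hw' hkt (nz _ hnkt).
have mK := mult _ _ _ hKv' hk (nz _ hnk).
have hal2 : complex.Re alpha ^+ 2 + complex.Im alpha ^+ 2 = 1.
  move: hal; rewrite normc_def => -[] h.
  rewrite -[LHS]sqr_sqrtr ?addr_ge0 ?sqr_ge0 // h. by rewrite expr1n.
have hal0 : alpha != 0.
  apply/eqP => h; move: hal2; rewrite h /= expr0n /= addr0 => /eqP; by rewrite eq_sym oner_eq0.
have hKcl := perp_closed_subspace hip (range S).
have hA : unitary_between ip U (ker S) K.
  split.
  - move=> x hx. have [c ->] := mKt _ hx. rewrite hUk.
    case: hKcl => _ _ CZ _. exact: CZ.
  - move=> a x y _ _. exact: hU.
  - move=> x hx. have [c ->] := mKt _ hx. rewrite hUk !nrmZ // hnk hnkt.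
    congr (Num.sqrt _ * _).
    move: hal2 hal0 hal hUk. case: c => a b. case: alpha => a2 b2 /= h _ _ _.
    rewrite -[RHS]mulr1 -h. ring.
  - move=> y hy. have [c ->] := mK _ hy.
    exists ((c / alpha) *: kt); split.
      case: (Kt_closed hip hS) => _ _ CZ _. exact: CZ.
    by rewrite hUk divfK.
have hUA : is_UA ip S U U by split.
have hdense := UA_dense hip hc hS hA hcnu hUA.
have [_ hiso _] := UA_unitary hip hc hS hA hUA.
move=> x. apply: (closed_contains_cspan (cspan_closed hip _)) (hdense x).
move=> o [k0 [hk0 hn]].
have [c hc0] := mK _ hk0.
case: hn => n [->|hn].
  rewrite hc0 iterZ //. apply: closure_sub => //. apply: spanZ. apply: span_sub.
  by exists k; split => //; exists n; left.
have [hc1|hc1] := eqVneq c 0.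
  have -> : o = 0.
    apply: (nrm_eq0 hip). rewrite -(iter_nrm _ _ _ _ hiso n o) hn hc0 hc1.
    by rewrite scale0r nrm0.
  by case: (cspan_closed hip (orbitZ U (eq^~ k))).
have -> : o = c *: (c^-1 *: o) by rewrite scalerA divff // scale1r.
apply: closure_sub => //. apply: spanZ. apply: span_sub.
exists k; split => //; exists n; right.
by rewrite iterZ // hn hc0 scalerA mulVf // scale1r.
Qed.
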